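(* Let $X,Y$ be strings over a binary alphabet, $\ell\ge1$, and $\mathcal{S}(\ell)$ an $\ell$-cover. Let $\mathcal{F}$ be the set of all strings occurring as a component of some pair in $\mathsf{Pairs}_\ell(X)\cup\mathsf{Pairs}_\ell(Y)$, and let $N_0(F),N_1(F)$ ($F\in\mathcal{F}$) be defined from a marking of light edges of $\mathcal{T}(\mathcal{F})$ in which every node has at most one outgoing non-light edge, as follows: $N_0(F)=\{F\}$ and $N_1(F)$ consists of $F$ and every string obtained from $F$ by choosing a light edge $(u,w)$ on the root-to-terminal path of $F$ and replacing $F[|u|+1]$ ($|u|$ the string depth of $u$) by the other letter. For $S\in\{X,Y\}$ and $d\in\{0,1\}$ let $$\mathsf{Pairs}^{(d)}_\ell(S)=\bigcup_{(U_1,U_2)\in\mathsf{Pairs}_\ell(S)}\ \bigcup_{d_1+d_2=d}\{(U_1',U_2') : U_1'\in N_{d_1}(U_1),\ U_2'\in N_{d_2}(U_2)\}.$$ If $\mathsf{LCF}_1(X,Y)\ge\ell$, then $$\mathsf{LCF}_1(X,Y)=\max_{k_1+k_2=1}\mathrm{maxPairLCP}(\mathsf{Pairs}^{(k_1)}_\ell(X),\mathsf{Pairs}^{(k_2)}_\ell(Y)).$$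
   Context: $U[i..j]$ denotes a factor, $U^R$ the reversal, $d_H$ the Hamming distance; $\mathsf{LCP}$ is the longest common prefix length; $\mathsf{LCP}_d(U,V)=\max\{p\le\min(|U|,|V|): d_H(U[1..p],V[1..p])\le d\}$. $\mathsf{LCF}_k(X,Y)$ is the maximum length of a factor of $X$ and a factor of $Y$ of equal length at Hamming distance at most $k$. A $d$-cover is a set $\mathcal{S}(d)\subseteq\mathbb{Z}_+$ with a function $h$, $0\le h(i,j)<d$, such that $i+h(i,j),j+h(i,j)\in\mathcal{S}(d)$ for all $i,j\in\mathbb{Z}_+$. $\mathsf{Pairs}_\ell(U)=\{((U[1..i-1])^R,U[i..|U|]) : i\in\mathcal{S}(\ell)\cap[1..|U|]\}$. $\mathrm{maxPairLCP}(\mathcal{P},\mathcal{Q})=\max\{\mathsf{LCP}(P_1,Q_1)+\mathsf{LCP}(P_2,Q_2):(P_1,P_2)\in\mathcal{P},(Q_1,Q_2)\in\mathcal{Q}\}$. $\mathcal{T}(\mathcal{F})$ is the compacted trie of $\mathcal{F}$ (root, branching and terminal nodes of the trie), string depth of a node = length of the string it represents. *)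

(* Defs.v *)
(* Strings over the binary alphabet are [seq bool];
   positions in the paper are 1-based, seq indices are 0-based. *)
From mathcomp Require Import all_boot.
Set Implicit Arguments. Unset Strict Implicit. Unset Printing Implicit Defensive.

Definition str := seq bool.

Fixpoint lcp (U V : str) : nat :=
  match U, V with
  | a :: U', b :: V' => if a == b then (lcp U' V').+1 else 0
  | _, _ => 0
  end.

Definition ham (U V : str) : nat := count (fun p => p.1 != p.2) (zip U V).

Definition LCF (k : nat) (X Y : str) : nat :=
  \max_(0 <= i < (size X).+1) \max_(0 <= j < (size Y).+1) \max_(0 <= l < (size X).+1)
    (if [&& i + l <= size X, j + l <= size Y &
           ham (take l (drop i X)) (take l (drop j Y)) <= k]
     then l else 0).

Definition is_cover (d : nat) (S : pred nat) (h : nat -> nat -> nat) : Prop :=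
  ~~ S 0 /\
  forall i j, 0 < i -> 0 < j -> [/\ h i j < d, S (i + h i j) & S (j + h i j)].

Definition Pairs (S : pred nat) (U : str) : seq (str * str) :=
  [seq (rev (take i.-1 U), drop i.-1 U) | i <- iota 1 (size U) & S i].

Definition components (P : seq (str * str)) : seq str :=
  flatten [seq [:: p.1; p.2] | p <- P].

(* compacted trie T(FF): nodes are the root, terminal nodes (elements of FF)
   and branching nodes (both extensions v0, v1 are prefixes of strings in FF) *)
Definition trie_node (FF : seq str) (v : str) : bool := has (prefix v) FF.

Definition cnode (FF : seq str) (v : str) : bool :=
  [|| v == [::], v \in FF |
      trie_node FF (rcons v false) && trie_node FF (rcons v true)].

Definition cedge (FF : seq str) (u w : str) : bool :=
  [&& cnode FF u, cnode FF w, trie_node FF w, prefix u w, size u < size w &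
      all (fun k => ~~ cnode FF (take k w)) (iota (size u).+1 (size w - (size u).+1))].

Definition light_marking (FF : seq str) (light : str -> str -> bool) : Prop :=
  forall u w1 w2, cedge FF u w1 -> cedge FF u w2 ->
    ~~ light u w1 -> ~~ light u w2 -> w1 = w2.

Definition flip_at (F : str) (p : nat) : str := set_nth false F p (~~ nth false F p).

(* N_1(F): F and flips of F[|u|+1] for light edges (u,w) on the root-to-terminal
   path of F (u = F[1..i], w = F[1..j], i < j <= |F|) *)
Definition N1 (FF : seq str) (light : str -> str -> bool) (F : str) : seq str :=
  F :: [seq flip_at F i | i <- iota 0 (size F) &
         has (fun j => cedge FF (take i F) (take j F) && light (take i F) (take j F))
             (iota i.+1 (size F - i))].

(* N_0(F) = {F};  N_1 as above (only d ∈ {0,1} are used) *)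
Definition Nd (FF : seq str) (light : str -> str -> bool) (d : nat) (F : str) : seq str :=
  if d is 0 then [:: F] else N1 FF light F.

Definition PairsD (FF : seq str) (light : str -> str -> bool) (d : nat)
    (S : pred nat) (U : str) : seq (str * str) :=
  flatten [seq flatten [seq [seq (a, b) | a <- Nd FF light d1 p.1,
                                          b <- Nd FF light (d - d1) p.2]
                       | d1 <- iota 0 d.+1]
          | p <- Pairs S U].

Definition maxPairLCP (P Q : seq (str * str)) : nat :=
  \max_(p <- P) \max_(q <- Q) (lcp p.1 q.1 + lcp p.2 q.2).

(* Main.v *)
Require Import Defs.
From mathcomp Require Import all_boot zify.
Set Implicit Arguments. Unset Strict Implicit. Unset Printing Implicit Defensive.
Implicit Types (S : pred nat) (U V F : str) (FF : seq str) (light : str -> str -> bool).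

Lemma lcp_leU U V : lcp U V <= size U.
Proof. elim: U V => [|x U IH] [|y V] //=; case: eqP => // _; exact: IH. Qed.
Lemma lcpC U V : lcp U V = lcp V U.
Proof. elim: U V => [|x U IH] [|y V] //=; rewrite eq_sym; case: eqP => // _; by rewrite IH. Qed.
Lemma lcp_leV U V : lcp U V <= size V.
Proof. rewrite lcpC; exact: lcp_leU. Qed.
Lemma lcp_nth U V k : k < lcp U V -> nth false U k = nth false V k.
Proof.
elim: U V k => [|x U IH] [|y V] k //=; case: eqP => // -> ; case: k => //= k.
exact: IH.
Qed.
Lemma lcp_ge n U V : n <= size U -> n <= size V ->
  (forall k, k < n -> nth false U k = nth false V k) -> n <= lcp U V.
Proof.
elim: n U V => // n IH [|x U] [|y V] //= hU hV H.
have := H 0 isT => /= ->; rewrite eqxx ltnS; apply: IH => // k hk.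
exact: (H k.+1).
Qed.

Lemma size_flip F m : m < size F -> size (flip_at F m) = size F.
Proof. move=> h; rewrite /flip_at size_set_nth; lia. Qed.
Lemma nth_flip F m k : nth false (flip_at F m) k = if k == m then ~~ nth false F m else nth false F k.
Proof. by rewrite /flip_at nth_set_nth. Qed.

Lemma lcp_flip_ge n m U V : n <= size U -> n <= size V -> m < n ->
  (forall k, k < n -> k != m -> nth false U k = nth false V k) ->
  nth false U m != nth false V m -> n <= lcp (flip_at U m) V.
Proof.
move=> hU hV hm H hne; apply: lcp_ge; first by rewrite size_flip //; lia.
  done.
move=> k hk; rewrite nth_flip; case: eqP => [->|/eqP]; last exact: H.
by move: hne; case: (nth false U m); case: (nth false V m).
Qed.

Lemma ham_count U V : size U = size V ->
  ham U V = count (fun t => nth false U t != nth false V t) (iota 0 (size U)).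
Proof.
rewrite /ham; elim: U V => [|x U IH] [|y V] //= [] hs.
rewrite IH // -(addn0 1) iotaDl count_map; congr (_ + _).
Qed.

Lemma count_le1 (P : pred nat) s : uniq s ->
  (forall t t', t \in s -> t' \in s -> P t -> P t' -> t = t') -> count P s <= 1.
Proof.
move=> us H; rewrite -size_filter.
have uf := filter_uniq P us.
case E: (filter P s) uf => [|x [|y r]] //= /andP[]; rewrite inE negb_or => /andP[/eqP nxy _] _.
have : x \in filter P s by rewrite E inE eqxx.
have : y \in filter P s by rewrite E !inE eqxx orbT.
rewrite !mem_filter => /andP[Py ys] /andP[Px xs].
by case: nxy; apply: H.
Qed.

Lemma count_ge2 (P : pred nat) s t t' : t \in s -> t' \in s -> P t -> P t' -> t != t' ->
  1 < count P s.
Proof.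
move=> ts t's Pt Pt' ne; rewrite -size_filter.
have : size [:: t; t'] <= size (filter P s).
  apply: uniq_leq_size; first by rewrite /= inE ne.
  by move=> z; rewrite !inE mem_filter => /orP[]/eqP->; apply/andP.
done.
Qed.

Lemma mem_Pairs S U p : p \in Pairs S U ->
  exists i, [/\ 0 < i, i <= size U, S i & p = (rev (take i.-1 U), drop i.-1 U)].
Proof.
case/mapP => i; rewrite mem_filter mem_iota => /andP[Si /andP[h1 h2]] ->.
exists i; split => //; lia.
Qed.

Lemma Pairs_mem S U i : 0 < i -> i <= size U -> S i ->
  (rev (take i.-1 U), drop i.-1 U) \in Pairs S U.
Proof.
move=> h1 h2 Si; apply/mapP; exists i => //; rewrite mem_filter mem_iota Si /=; lia.
Qed.

Lemma inner1 FF light (q : str * str) : flatten [seq [seq (a, b) | a <- Nd FF light d1 q.1, b <- Nd FF light (1 - d1) q.2] | d1 <- iota 0 2] = ([seq (q.1,b) | b <- N1 FF light q.2] ++ [::]) ++ (flatten [seq [:: (a,q.2)] | a <- N1 FF light q.1] ++ [::]).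
Proof. reflexivity. Qed.
Lemma inner0 FF light (q : str * str) : flatten [seq [seq (a, b) | a <- Nd FF light d1 q.1, b <- Nd FF light (0 - d1) q.2] | d1 <- iota 0 1] = ([:: (q.1,q.2)] ++ [::]) ++ [::].
Proof. reflexivity. Qed.

Lemma mem_PairsD0 FF light S U p : p \in PairsD FF light 0 S U -> p \in Pairs S U.
Proof.
case/flatten_mapP => q qP; rewrite inner0 !cats0 inE => /eqP->; by case: q qP.
Qed.

Lemma PairsD0_mem FF light S U p : p \in Pairs S U -> p \in PairsD FF light 0 S U.
Proof.
move=> pP; apply/flatten_mapP; exists p => //; rewrite inner0 !cats0 inE; by case: p {pP}.
Qed.

Lemma mem_PairsD1 FF light S U p : p \in PairsD FF light 1 S U ->
  exists2 q, q \in Pairs S U &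
   (p.1 = q.1 /\ p.2 \in N1 FF light q.2) \/ (p.1 \in N1 FF light q.1 /\ p.2 = q.2).
Proof.
case/flatten_mapP => q qP; rewrite inner1 !cats0 mem_cat => /orP[].
  by case/mapP => b hb ->; exists q => //; left.
case/flatten_mapP => a ha; rewrite inE => /eqP->; exists q => //; by right.
Qed.

Lemma PairsD1_mem2 FF light S U q b : q \in Pairs S U -> b \in N1 FF light q.2 ->
  (q.1, b) \in PairsD FF light 1 S U.
Proof.
move=> qP hb; apply/flatten_mapP; exists q => //; rewrite inner1 !cats0 mem_cat; apply/orP; left.
exact: map_f.
Qed.

Lemma PairsD1_mem1 FF light S U q a : q \in Pairs S U -> a \in N1 FF light q.1 ->
  (a, q.2) \in PairsD FF light 1 S U.
Proof.
move=> qP ha; apply/flatten_mapP; exists q => //; rewrite inner1 !cats0 mem_cat; apply/orP; right.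
by apply/flatten_mapP; exists a; rewrite ?inE.
Qed.

Lemma N1_self FF light F : F \in N1 FF light F.
Proof. by rewrite inE eqxx. Qed.

Lemma N1_close FF light F F' : F' \in N1 FF light F ->
  size F' = size F /\ exists p, forall m, m != p -> nth false F' m = nth false F m.
Proof.
rewrite inE => /orP[/eqP->|/mapP[i]]; first by split => //; exists 0.
rewrite mem_filter mem_iota => /andP[_ /andP[_ hi]] ->.
split; first exact: size_flip.
by exists i => m hm; rewrite nth_flip (negbTE hm).
Qed.

Lemma comp_mem P p : p \in P -> p.1 \in components P /\ p.2 \in components P.
Proof.
by move=> pP; split; apply/flatten_mapP; exists p => //; rewrite !inE eqxx ?orbT.
Qed.

Lemma edge_next FF U m : U \in FF -> m < size U -> cnode FF (take m U) ->
  exists j, [/\ m < j, j <= size U & cedge FF (take m U) (take j U)].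
Proof.
move=> UF hm cu.
have ex : exists j, [&& m < j, j <= size U & cnode FF (take j U)].
  exists (size U); rewrite hm leqnn take_size /cnode UF /=; by rewrite orbT.
case: (ex_minnP ex) => j /and3P[h1 h2 h3] hmin.
exists j; split => //.
rewrite /cedge cu h3 /=.
have -> : trie_node FF (take j U) by apply/hasP; exists U => //; exact: prefix_take.
rewrite prefixE !size_takel; try lia.
rewrite take_takel; last lia.
rewrite eqxx h1 /=.
apply/allP => k; rewrite mem_iota => /andP[hk1 hk2].
rewrite take_takel; last lia.
apply/negP => ck.
have := hmin k; rewrite ck andbT.
have -> : m < k by lia.
have -> : k <= size U by lia.
move=> /(_ isT); lia.
Qed.

Lemma N1_flip_mem FF light F m j : m < j -> j <= size F ->
  cedge FF (take m F) (take j F) -> light (take m F) (take j F) ->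
  flip_at F m \in N1 FF light F.
Proof.
move=> h1 h2 ce li; rewrite /N1 inE; apply/orP; right; apply/mapP; exists m => //.
rewrite mem_filter mem_iota /=; apply/andP; split; last lia.
apply/hasP; exists j; first by rewrite mem_iota; lia.
by rewrite ce li.
Qed.

Lemma trie_branch FF light U V m : light_marking FF light -> U \in FF -> V \in FF ->
  m < size U -> m < size V -> take m U = take m V -> nth false U m != nth false V m ->
  flip_at U m \in N1 FF light U \/ flip_at V m \in N1 FF light V.
Proof.
move=> LM UF VF hU hV et ne.
have cu : cnode FF (take m U).
  rewrite /cnode; apply/orP; right; apply/orP; right.
  have pU : trie_node FF (rcons (take m U) (nth false U m)).
    by apply/hasP; exists U => //; rewrite -take_nth //; exact: prefix_take.
  have pV : trie_node FF (rcons (take m U) (nth false V m)).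
    by apply/hasP; exists V => //; rewrite et -take_nth //; exact: prefix_take.
  move: ne pU pV; case: (nth false U m); case: (nth false V m) => // _ -> ->; done.
have cv : cnode FF (take m V) by rewrite -et.
case: (edge_next UF hU cu) => jU [a1 a2 a3].
case: (edge_next VF hV cv) => jV [b1 b2 b3].
case LU: (light (take m U) (take jU U)); first by left; exact: (N1_flip_mem a1 a2 a3 LU).
case LV: (light (take m V) (take jV V)); first by right; exact: (N1_flip_mem b1 b2 b3 LV).
exfalso.
have b3' : cedge FF (take m U) (take jV V) by rewrite et.
have LV' : ~~ light (take m U) (take jV V) by rewrite et LV.
have E := LM _ _ _ a3 b3' (negbT LU) LV'.
move/negP: ne; apply; apply/eqP.
by rewrite -(nth_take _ a1) E nth_take.
Qed.

Lemma LCF_ub k X Y R : (forall i j l, i + l <= size X -> j + l <= size Y ->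
   ham (take l (drop i X)) (take l (drop j Y)) <= k -> l <= R) -> LCF k X Y <= R.
Proof.
move=> H; rewrite /LCF.
elim/big_ind: _ => [//|x y hx hy|i _]; first by rewrite geq_max hx hy.
elim/big_ind: _ => [//|x y hx hy|j _]; first by rewrite geq_max hx hy.
elim/big_ind: _ => [//|x y hx hy|l _]; first by rewrite geq_max hx hy.
case: ifP => // /and3P[h1 h2 h3]; exact: H h1 h2 h3.
Qed.

Lemma LCF_lb k X Y i j l : i + l <= size X -> j + l <= size Y ->
   ham (take l (drop i X)) (take l (drop j Y)) <= k -> l <= LCF k X Y.
Proof.
move=> h1 h2 h3; rewrite /LCF.
have Hi : i \in index_iota 0 (size X).+1 by rewrite mem_index_iota; lia.
have Hj : j \in index_iota 0 (size Y).+1 by rewrite mem_index_iota; lia.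
have Hl : l \in index_iota 0 (size X).+1 by rewrite mem_index_iota; lia.
apply: leq_trans (leq_bigmax_seq _ Hi isT); rewrite /=.
apply: leq_trans (leq_bigmax_seq _ Hj isT); rewrite /=.
apply: leq_trans (leq_bigmax_seq _ Hl isT); rewrite /=.
by rewrite h1 h2 h3.
Qed.

Lemma ham_align X Y a b l : a + l <= size X -> b + l <= size Y ->
  ham (take l (drop a X)) (take l (drop b Y)) =
  count (fun t => nth false X (a+t) != nth false Y (b+t)) (iota 0 l).
Proof.
move=> h1 h2.
have s1 : size (take l (drop a X)) = l by rewrite size_takel // size_drop; lia.
have s2 : size (take l (drop b Y)) = l by rewrite size_takel // size_drop; lia.
rewrite ham_count; last by rewrite s1 s2.
rewrite s1; apply: eq_in_count => t; rewrite mem_iota => /andP[_ ht].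
by rewrite !nth_take // !nth_drop.
Qed.

Definition Ed (A B U V : str) (m : nat) : bool :=
  (nth false A m != nth false U m) || (nth false B m != nth false V m).

Lemma Ed_mis (A B U V : str) m : m < lcp A B -> nth false U m != nth false V m -> Ed A B U V m.
Proof.
move=> hm hne; rewrite /Ed; case: eqP => [e1|//]; case: eqP => [e2|//].
by move: hne; rewrite -e1 -e2 (lcp_nth hm) eqxx.
Qed.

Lemma core X Y i j A1 A2 B1 B2 : i <= size X -> j <= size Y ->
  size A1 = i -> size A2 = size X - i -> size B1 = j -> size B2 = size Y - j ->
  (exists c p, forall m,
     (Ed A1 B1 (rev (take i X)) (rev (take j Y)) m -> c && (m == p)) /\
     (Ed A2 B2 (drop i X) (drop j Y) m -> ~~ c && (m == p))) ->
  lcp A1 B1 + lcp A2 B2 <= LCF 1 X Y.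
Proof.
move=> hi hj sA1 sA2 sB1 sB2 [c [p Hcp]].
have a1 := lcp_leU A1 B1; have b1 := lcp_leV A1 B1.
have a2 := lcp_leU A2 B2; have b2 := lcp_leV A2 B2.
set l1 := lcp A1 B1 in a1 b1 *; set l2 := lcp A2 B2 in a2 b2 *.
have claim : forall t, t < l1 + l2 ->
    nth false X (i - l1 + t) != nth false Y (j - l1 + t) ->
    (t < l1 /\ Ed A1 B1 (rev (take i X)) (rev (take j Y)) (l1.-1 - t)) \/
    (l1 <= t /\ Ed A2 B2 (drop i X) (drop j Y) (t - l1)).
  move=> t ht hM; case: (ltnP t l1) => htl.
    left; split => //; apply: Ed_mis; first lia.
    rewrite !nth_rev ?size_takel //; try lia.
    rewrite nth_take; last lia. rewrite nth_take; last lia.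
    have -> : i - (l1.-1 - t).+1 = i - l1 + t by lia.
    have -> : j - (l1.-1 - t).+1 = j - l1 + t by lia.
    by [].
  right; split => //; apply: Ed_mis; first lia.
  rewrite !nth_drop.
  have -> : i + (t - l1) = i - l1 + t by lia.
  have -> : j + (t - l1) = j - l1 + t by lia.
  by [].
apply: (@LCF_lb 1 X Y (i - l1) (j - l1) (l1 + l2)); [lia|lia|].
rewrite ham_align; [|lia|lia].
apply: count_le1; first exact: iota_uniq.
move=> t t'; rewrite !mem_iota /= => ht ht' Mt Mt'.
have [[x1 x2]|[x1 x2]] := claim t ht Mt; have [[y1 y2]|[y1 y2]] := claim t' ht' Mt';
  have [e1 e2] := Hcp (l1.-1 - t); have [f1 f2] := Hcp (l1.-1 - t');
  have [g1 g2] := Hcp (t - l1); have [k1 k2] := Hcp (t' - l1).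
- move: (e1 x2) (f1 y2) => /andP[_ /eqP] E1 /andP[_ /eqP] E2; clear Mt Mt' x2 y2 claim Hcp e1 e2 f1 f2 g1 g2 k1 k2; lia.
- by move: (e1 x2) (k2 y2) => /andP[-> _] /andP[].
- by move: (g2 x2) (f1 y2) => /andP[/negbTE -> _] /andP[].
- move: (g2 x2) (k2 y2) => /andP[_ /eqP] E1 /andP[_ /eqP] E2; clear Mt Mt' x2 y2 claim Hcp e1 e2 f1 f2 g1 g2 k1 k2; lia.
Qed.

Lemma lcp_flip_either n m U V : n <= size U -> n <= size V -> m < n ->
  (forall k, k < n -> k != m -> nth false U k = nth false V k) ->
  nth false U m != nth false V m -> n <= lcp (flip_at U m) V /\ n <= lcp U (flip_at V m).
Proof.
move=> hU hV hm H hne; split; first exact: lcp_flip_ge.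
rewrite lcpC; apply: lcp_flip_ge => //; first by move=> k hk hkm; rewrite H.
by rewrite eq_sym.
Qed.

Lemma take_agree m U V : m <= size U -> m <= size V ->
  (forall k, k < m -> nth false U k = nth false V k) -> take m U = take m V.
Proof.
move=> hU hV H; apply: (@eq_from_nth _ false); first by rewrite !size_takel.
by move=> k; rewrite size_takel // => hk; rewrite !nth_take // H.
Qed.

Lemma mpl_lb P Q p q n : p \in P -> q \in Q -> n <= lcp p.1 q.1 + lcp p.2 q.2 ->
  n <= maxPairLCP P Q.
Proof.
move=> pP qQ hn; rewrite /maxPairLCP.
apply: leq_trans (leq_bigmax_seq _ pP isT).
by apply: leq_trans (leq_bigmax_seq _ qQ isT).
Qed.

Lemma Pairs_mem' S U i : i < size U -> S i.+1 -> (rev (take i U), drop i U) \in Pairs S U.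
Proof. move=> h1 h2; exact: (@Pairs_mem S U i.+1). Qed.

Lemma nth_U1 X c hh k : k < hh -> c + hh <= size X ->
  nth false (rev (take (c+hh) X)) k = nth false X (c + (hh.-1 - k)).
Proof.
move=> hk hs; rewrite nth_rev; last by rewrite size_takel //; lia.
rewrite size_takel // nth_take; last lia.
f_equal; lia.
Qed.

Ltac nl := repeat match goal with
 | H : is_true (_ <= _) |- _ => revert H
 | H : @eq nat _ _ |- _ => revert H
 end; repeat match goal with H : _ |- _ => clear H end; intros; lia.

Lemma main_le X Y ell S h light a b l :
  is_cover ell S h -> light_marking (components (Pairs S X ++ Pairs S Y)) light ->
  a + l <= size X -> b + l <= size Y ->
  ham (take l (drop a X)) (take l (drop b Y)) <= 1 -> ell <= l ->
  l <= maxn (maxPairLCP (PairsD (components (Pairs S X ++ Pairs S Y)) light 0 S X)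
                        (PairsD (components (Pairs S X ++ Pairs S Y)) light 1 S Y))
            (maxPairLCP (PairsD (components (Pairs S X ++ Pairs S Y)) light 1 S X)
                        (PairsD (components (Pairs S X ++ Pairs S Y)) light 0 S Y)).
Proof.
move=> [_ Hc] LM hX hY hham hl.
set FF := components (Pairs S X ++ Pairs S Y) in LM *.
have [hh1 hS1 hS2] := Hc a.+1 b.+1 isT isT.
set hh := h a.+1 b.+1 in hh1 hS1 hS2.
have pX : (rev (take (a+hh) X), drop (a+hh) X) \in Pairs S X.
  by apply: Pairs_mem'; [lia | rewrite -addSn].
have pY : (rev (take (b+hh) Y), drop (b+hh) Y) \in Pairs S Y.
  by apply: Pairs_mem'; [lia | rewrite -addSn].
have pXc : (rev (take (a+hh) X), drop (a+hh) X) \in Pairs S X ++ Pairs S Y.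
  by rewrite mem_cat pX.
have pYc : (rev (take (b+hh) Y), drop (b+hh) Y) \in Pairs S X ++ Pairs S Y.
  by rewrite mem_cat pY orbT.
have [U1F U2F] := comp_mem pXc.
have [V1F V2F] := comp_mem pYc.
clear pXc pYc.
rewrite /= in U1F U2F V1F V2F.
have sU1 : size (rev (take (a+hh) X)) = a + hh by rewrite size_rev size_takel //; lia.
have sV1 : size (rev (take (b+hh) Y)) = b + hh by rewrite size_rev size_takel //; lia.
have sU2 : size (drop (a+hh) X) + (a + hh) = size X by rewrite size_drop; clear -hX hh1 hl; lia.
have sV2 : size (drop (b+hh) Y) + (b + hh) = size Y by rewrite size_drop; clear -hY hh1 hl; lia.
set U1 := rev (take (a+hh) X) in pX U1F sU1 *.
set V1 := rev (take (b+hh) Y) in pY V1F sV1 *.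
set U2 := drop (a+hh) X in pX U2F sU2 *.
set V2 := drop (b+hh) Y in pY V2F sV2 *.
have uniqM : forall t t', t < l -> t' < l ->
    nth false X (a+t) != nth false Y (b+t) -> nth false X (a+t') != nth false Y (b+t') -> t = t'.
  move=> t t' ht ht' Mt Mt'; apply/eqP; apply/negPn/negP => ne.
  move: hham; rewrite ham_align // => hc.
  have := @count_ge2 (fun t => nth false X (a+t) != nth false Y (b+t)) (iota 0 l) t t'.
  by rewrite !mem_iota /= => /(_ ht ht' Mt Mt' ne); rewrite ltnNge hc.
have A1 : forall k, k < hh -> (nth false U1 k != nth false V1 k) =
    (nth false X (a + (hh.-1 - k)) != nth false Y (b + (hh.-1 - k))).
  move=> k hk; rewrite /U1 /V1 !nth_U1 //; lia.
have A2 : forall k, (nth false U2 k != nth false V2 k) =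
    (nth false X (a + (hh + k)) != nth false Y (b + (hh + k))).
  by move=> k; rewrite /U2 /V2 !nth_drop !addnA.
case: (boolP (has (fun t => nth false X (a+t) != nth false Y (b+t)) (iota 0 l))).
- case/hasP => t0; rewrite mem_iota /= => ht0 Mt0.
  have {}ht0 : t0 < l by move: ht0; clear; nl.
  have hhl : hh < l by clear -hh1 hl; nl.
  case: (ltnP t0 hh) => ht.
  +
    have agree : forall k, k < hh -> k != hh.-1 - t0 -> nth false U1 k = nth false V1 k.
      move=> k hk hkm; apply/eqP/negPn; rewrite A1 //; apply/negP => Mk.
      have hk' : hh.-1 - k < l by clear -hk hhl; nl.
      have := uniqM _ _ hk' ht0 Mk Mt0; move/eqP: hkm; clear -hk ht; nl.
    have nem : nth false U1 (hh.-1 - t0) != nth false V1 (hh.-1 - t0).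
      rewrite A1; last nl.
      by have -> : hh.-1 - (hh.-1 - t0) = t0 by nl.
    have tk : take (hh.-1 - t0) U1 = take (hh.-1 - t0) V1.
      apply: take_agree; [nl|nl|] => k hk; apply: agree; nl.
    have [lf1 lf2] := @lcp_flip_either hh (hh.-1 - t0) U1 V1
      ltac:(nl) ltac:(nl) ltac:(nl) agree nem.
    have l2 : l - hh <= lcp U2 V2.
      apply: lcp_ge; [nl|nl|] => k hk; apply/eqP/negPn; rewrite A2; apply/negP => Mk.
      have hk' : hh + k < l by clear -hk hhl; nl.
      have := uniqM _ _ hk' ht0 Mk Mt0; clear -ht; nl.
    case: (trie_branch LM U1F V1F _ _ tk nem); [nl|nl| |].
    * move=> fU; rewrite leq_max; apply/orP; right.
      apply: (mpl_lb (PairsD1_mem1 pX fU) (PairsD0_mem _ _ pY)) => /=; nl.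
    * move=> fV; rewrite leq_max; apply/orP; left.
      apply: (mpl_lb (PairsD0_mem _ _ pX) (PairsD1_mem1 pY fV)) => /=; nl.
  +
    have agree : forall k, k < l - hh -> k != t0 - hh -> nth false U2 k = nth false V2 k.
      move=> k hk hkm; apply/eqP/negPn; rewrite A2 //; apply/negP => Mk.
      have hk' : hh + k < l by clear -hk hhl; nl.
      have := uniqM _ _ hk' ht0 Mk Mt0; move/eqP: hkm; clear -hk ht ht0; nl.
    have nem : nth false U2 (t0 - hh) != nth false V2 (t0 - hh).
      rewrite A2.
      by have -> : hh + (t0 - hh) = t0 by nl.
    have tk : take (t0 - hh) U2 = take (t0 - hh) V2.
      apply: take_agree; [nl|nl|] => k hk; apply: agree; nl.
    have [lf1 lf2] := @lcp_flip_either (l - hh) (t0 - hh) U2 V2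
      ltac:(nl) ltac:(nl) ltac:(nl) agree nem.
    have l1 : hh <= lcp U1 V1.
      apply: lcp_ge; [nl|nl|] => k hk; apply/eqP/negPn; rewrite A1 //; apply/negP => Mk.
      have hk' : hh.-1 - k < l by clear -hk hhl; nl.
      have := uniqM _ _ hk' ht0 Mk Mt0; clear -ht hk; nl.
    case: (trie_branch LM U2F V2F _ _ tk nem); [nl|nl| |].
    * move=> fU; rewrite leq_max; apply/orP; right.
      apply: (mpl_lb (PairsD1_mem2 pX fU) (PairsD0_mem _ _ pY)) => /=; nl.
    * move=> fV; rewrite leq_max; apply/orP; left.
      apply: (mpl_lb (PairsD0_mem _ _ pX) (PairsD1_mem2 pY fV)) => /=; nl.
- move/hasPn => noM.
  have l1 : hh <= lcp U1 V1.
    apply: lcp_ge; [nl|nl|] => k hk; apply/eqP/negPn; rewrite A1 //.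
    apply: noM; rewrite mem_iota; nl.
  have l2 : l - hh <= lcp U2 V2.
    apply: lcp_ge; [nl|nl|] => k hk; apply/eqP/negPn; rewrite A2.
    apply: noM; rewrite mem_iota; nl.
  rewrite leq_max; apply/orP; right.
  apply: (mpl_lb (PairsD1_mem2 pX (N1_self _ _ _)) (PairsD0_mem _ _ pY)) => /=; nl.
Qed.

Definition cl (F' F : str) r := forall m, m != r -> nth false F' m = nth false F m.

Lemma cl_refl F r : cl F F r. Proof. by []. Qed.

Lemma Ed_cl A B U V r m : cl A U r -> cl B V r -> Ed A B U V m -> m == r.
Proof.
move=> hA hB; rewrite /Ed; case: (eqVneq m r) => // ne.
by rewrite hA // hB // !eqxx.
Qed.

Lemma hypc (c : bool) A1 B1 U1 V1 A2 B2 U2 V2 r :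
  (if c then cl A1 U1 r /\ cl B1 V1 r /\ A2 = U2 /\ B2 = V2
   else cl A2 U2 r /\ cl B2 V2 r /\ A1 = U1 /\ B1 = V1) ->
  exists c p, forall m, (Ed A1 B1 U1 V1 m -> c && (m == p)) /\
                        (Ed A2 B2 U2 V2 m -> ~~ c && (m == p)).
Proof.
case: c => [[h1 [h2 [-> ->]]]|[h1 [h2 [-> ->]]]]; [exists true | exists false]; exists r => m;
  split => /=; try exact: Ed_cl; by rewrite /Ed !eqxx.
Qed.

Lemma N1_cl FF light F F' : F' \in N1 FF light F -> size F' = size F /\ exists r, cl F' F r.
Proof. exact: N1_close. Qed.

Lemma pair_sizes (X : str) i : 0 < i -> i <= size X ->
  size (rev (take i.-1 X)) = i.-1 /\ size (drop i.-1 X) = size X - i.-1.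
Proof. by move=> h1 h2; rewrite size_rev size_takel ?size_drop //; lia. Qed.

Lemma rhs_le1 X Y S FF light :
  maxPairLCP (PairsD FF light 0 S X) (PairsD FF light 1 S Y) <= LCF 1 X Y.
Proof.
apply/bigmax_leqP_seq => p pP _; apply/bigmax_leqP_seq => q qQ _.
have [i [i0 iX iS ->]] := mem_Pairs (mem_PairsD0 pP).
have [q0 q0P Hq] := mem_PairsD1 qQ.
have [j [j0 jY jS Eq0]] := mem_Pairs q0P; subst q0.
have [sU1 sU2] := pair_sizes i0 iX; have [sV1 sV2] := pair_sizes j0 jY.
case: q Hq {qQ} => B1 B2 /= [[-> hB]|[hB ->]].
- have [sB [r hr]] := N1_cl hB.
  apply: (@core X Y i.-1 j.-1); [lia|lia|by rewrite ?sB|by rewrite ?sB|by rewrite ?sB|by rewrite ?sB|].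
  by apply: (@hypc false _ _ _ _ _ _ _ _ r); split; [exact: cl_refl|].
- have [sB [r hr]] := N1_cl hB.
  apply: (@core X Y i.-1 j.-1); [lia|lia|by rewrite ?sB|by rewrite ?sB|by rewrite ?sB|by rewrite ?sB|].
  by apply: (@hypc true _ _ _ _ _ _ _ _ r); split; [exact: cl_refl|].
Qed.

Lemma rhs_le2 X Y S FF light :
  maxPairLCP (PairsD FF light 1 S X) (PairsD FF light 0 S Y) <= LCF 1 X Y.
Proof.
apply/bigmax_leqP_seq => p pP _; apply/bigmax_leqP_seq => q qQ _.
have [j [j0 jY jS ->]] := mem_Pairs (mem_PairsD0 qQ).
have [p0 p0P Hp] := mem_PairsD1 pP.
have [i [i0 iX iS Ep0]] := mem_Pairs p0P; subst p0.
have [sU1 sU2] := pair_sizes i0 iX; have [sV1 sV2] := pair_sizes j0 jY.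
case: p Hp {pP} => A1 A2 /= [[-> hA]|[hA ->]].
- have [sA [r hr]] := N1_cl hA.
  apply: (@core X Y i.-1 j.-1); [lia|lia|by rewrite ?sA|by rewrite ?sA|by rewrite ?sA|by rewrite ?sA|].
  by apply: (@hypc false _ _ _ _ _ _ _ _ r); split; [|split; [exact: cl_refl|]].
- have [sA [r hr]] := N1_cl hA.
  apply: (@core X Y i.-1 j.-1); [lia|lia|by rewrite ?sA|by rewrite ?sA|by rewrite ?sA|by rewrite ?sA|].
  by apply: (@hypc true _ _ _ _ _ _ _ _ r); split; [|split; [exact: cl_refl|]].
Qed.

Theorem corollary6 (X Y : seq bool) (ell : nat) (S : pred nat)
    (h : nat -> nat -> nat) (light : seq bool -> seq bool -> bool) :
  1 <= ell ->
  is_cover ell S h ->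
  light_marking (components (cat (Pairs S X) (Pairs S Y))) light ->
  ell <= LCF 1 X Y ->
  let FF := components (cat (Pairs S X) (Pairs S Y)) in
  LCF 1 X Y =
    maxn (maxPairLCP (PairsD FF light 0 S X) (PairsD FF light 1 S Y))
         (maxPairLCP (PairsD FF light 1 S X) (PairsD FF light 0 S Y)).
Proof.
move=> h1 hc LM hL FF; apply/eqP; rewrite eqn_leq; apply/andP; split; last first.
  by rewrite geq_max rhs_le1 rhs_le2.
have : LCF 1 X Y <= maxn (maxn (maxPairLCP (PairsD FF light 0 S X) (PairsD FF light 1 S Y))
         (maxPairLCP (PairsD FF light 1 S X) (PairsD FF light 0 S Y))) ell.-1.
  apply: LCF_ub => i j l hi hj hh.
  case: (leqP ell l) => hle.
    by rewrite leq_max; apply/orP; left; exact: (main_le hc LM hi hj hh hle).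
  by rewrite leq_max; apply/orP; right; lia.
rewrite leq_max => /orP[//|]; lia.
Qed.
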